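(* Let $\Sigma$ be an alphabet and $L\subseteq\Sigma^*$. There exists an MPDA $\mathcal A$ with input alphabet $\Sigma$ and $L(\mathcal A)=L$ if and only if $L$ is context-free and every string in $L$ has length at least $2$.
   Context: A Moore push-down automaton (MPDA) is $\mathcal A=(Q,\Sigma,\Gamma,\delta,\tau,I,F)$ with finite sets of states $Q$, input symbols $\Sigma$, stack symbols $\Gamma$, transitions $\delta\subseteq(Q\times\Gamma^{\le1}\times\Gamma^{\le1}\times Q)\setminus(Q\times\Gamma\times\Gamma\times Q)$ (where $\Gamma^{\le1}=\{\varepsilon\}\cup\Gamma$; so a transition pops one symbol, pushes one symbol, or ignores the stack), output function $\tau:Q\to\Sigma$, and initial/final states $I,F\subseteq Q$. Configurations are pairs $\langle q,\alpha\rangle\in Q\times\Gamma^*$ (top of stack leftmost). Moves: $\langle q,\gamma\alpha\rangle\vdash\langle q',\gamma'\alpha\rangle$ for $(q,\gamma,\gamma',q')\in\delta$, $\alpha\in\Gamma^*$, provided $\gamma\alpha\neq\varepsilon$. A configuration is initial if $q\in I$ and $\alpha\in\Gamma$ (exactly one stack symbol), final if $q\in F$ and $\alpha=\varepsilon$. An accepting run is a sequence $\langle q_0,\alpha_0\rangle,\dots,\langle q_n,\alpha_n\rangle$ of configurations related successively by moves, starting in an initial and ending in a final configuration. $L(\mathcal A)$ is the set of strings $\tau(q_0)\cdots\tau(q_n)$ over all accepting runs. *)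

(* Defs.v *)
From mathcomp Require Import all_boot.
Set Implicit Arguments.
Unset Strict Implicit.
Unset Printing Implicit Defensive.

(* seq of a Gamma^{<=1} element: None = epsilon, Some g = g *)
Definition oseq (T : Type) (o : option T) : seq T :=
  if o is Some g then [:: g] else [::].

Record MPDA (Sigma : finType) := {
  mQ : finType;
  mGamma : finType;
  mdelta : pred (mQ * option mGamma * option mGamma * mQ);
  mdelta_ok : forall q g g' q', ~~ mdelta (q, Some g, Some g', q');
  mtau : mQ -> Sigma;
  mI : pred mQ;
  mF : pred mQ
}.

Definition config (Sigma : finType) (A : MPDA Sigma) : Type :=
  (mQ A * seq (mGamma A))%type.

(* one move  <q, gamma alpha> |- <q', gamma' alpha>, with gamma alpha <> eps;
   top of stack is the head of the list *)
Definition mstep (Sigma : finType) (A : MPDA Sigma) (c c' : config A) : Prop :=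
  exists (g g' : option (mGamma A)) (alpha : seq (mGamma A)),
    @mdelta _ A (c.1, g, g', c'.1) /\
    c.2 = oseq g ++ alpha /\ c'.2 = oseq g' ++ alpha /\
    oseq g ++ alpha <> [::].

Definition minitial (Sigma : finType) (A : MPDA Sigma) (c : config A) : Prop :=
  @mI _ A c.1 /\ size c.2 = 1.

Definition mfinal (Sigma : finType) (A : MPDA Sigma) (c : config A) : Prop :=
  @mF _ A c.1 /\ c.2 = [::].

Definition MPDA_lang (Sigma : finType) (A : MPDA Sigma) (w : seq Sigma) : Prop :=
  exists (n : nat) (c : nat -> config A),
    minitial (c 0) /\ mfinal (c n) /\
    (forall i, i < n -> mstep (c i) (c i.+1)) /\
    w = [seq @mtau _ A (c i).1 | i <- iota 0 n.+1].

Record CFG (Sigma : finType) := {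
  gN : finType;
  gS : gN;
  gP : seq (gN * seq (gN + Sigma))
}.

Definition gderive1 (Sigma : finType) (G : CFG Sigma)
    (u v : seq (gN G + Sigma)) : Prop :=
  exists (x y : seq (gN G + Sigma)) (X : gN G) (rhs : seq (gN G + Sigma)),
    (X, rhs) \in @gP _ G /\ u = x ++ inl X :: y /\ v = x ++ rhs ++ y.

Inductive gderives (Sigma : finType) (G : CFG Sigma) :
    seq (gN G + Sigma) -> seq (gN G + Sigma) -> Prop :=
| gderives_refl u : @gderives Sigma G u u
| gderives_step u v w : @gderive1 Sigma G u v -> @gderives Sigma G v w -> @gderives Sigma G u w.

Definition CFG_lang (Sigma : finType) (G : CFG Sigma) (w : seq Sigma) : Prop :=
  @gderives _ G [:: inl (@gS _ G)] (map inr w).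

Definition context_free (Sigma : finType) (L : seq Sigma -> Prop) : Prop :=
  exists G : CFG Sigma, forall w, CFG_lang G w <-> L w.

(* Main.v *)
Require Import Defs.
From mathcomp Require Import all_boot.
From Stdlib Require Import ClassicalEpsilon.
Set Implicit Arguments.
Unset Strict Implicit.
Unset Printing Implicit Defensive.

Section Grammar.
Variables (Sigma : finType) (G : CFG Sigma).
Local Notation sym := (gN G + Sigma)%type.
Local Notation gd := (@gderives _ G).
Local Notation gd1 := (@gderive1 _ G).

Inductive gen : seq sym -> seq Sigma -> Prop :=
| gen_nil : gen [::] [::]
| gen_t a s w : gen s w -> gen (inr a :: s) (a :: w)
| gen_n X rhs s u v : (X, rhs) \in gP G -> gen rhs u -> gen s v ->
    gen (inl X :: s) (u ++ v).

Lemma gen_cat s1 s2 w1 w2 : gen s1 w1 -> gen s2 w2 -> gen (s1 ++ s2) (w1 ++ w2).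
Proof.
move=> H1 H2; elim: H1 => //=.
- by move=> a s w _ IH; apply: gen_t.
- by move=> X rhs s u v Hin Hr _ _ IH; rewrite -catA; apply: gen_n Hin Hr IH.
Qed.

Lemma gen_split s1 s2 w : gen (s1 ++ s2) w ->
  exists w1 w2, w = w1 ++ w2 /\ gen s1 w1 /\ gen s2 w2.
Proof.
elim: s1 w => [|x s1 IH] w /= H.
  by exists [::], w; split => //; split => //; apply: gen_nil.
inversion H; subst.
- have [w1 [w2 [-> [Ha Hb]]]] := IH _ H3.
  by exists (a :: w1), w2; split => //; split => //; apply: gen_t.
- have [w1 [w2 [-> [Ha Hb]]]] := IH _ H5.
  exists (u ++ w1), w2; rewrite catA; split => //; split => //.
  exact: gen_n H2 H3 Ha.
Qed.

Lemma gen_cons_inv x s w : gen (x :: s) w ->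
  exists w1 w2, w = w1 ++ w2 /\ gen [:: x] w1 /\ gen s w2.
Proof. by move=> H; apply: (@gen_split [:: x] s). Qed.

Lemma gen_terms t : gen (map inr t) t.
Proof. by elim: t => [|a t IH] /=; [apply: gen_nil | apply: gen_t]. Qed.

Lemma gen_terms_inv t w : gen (map inr t) w -> w = t.
Proof.
elim: t w => [|a t IH] w /= H; inversion H; subst => //.
by rewrite (IH _ H3).
Qed.

Lemma gen_single x u : gen [:: x] u ->
  match x with
  | inr a => u = [:: a]
  | inl X => exists rhs, (X, rhs) \in gP G /\ gen rhs u
  end.
Proof.
move=> H; inversion H; subst.
- by inversion H3.
- by inversion H5; subst; rewrite cats0; exists rhs.
Qed.

Lemma gen_N X rhs u : (X, rhs) \in gP G -> gen rhs u -> gen [:: inl X] u.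
Proof. by move=> Hin H; rewrite -[u]cats0; apply: gen_n Hin H gen_nil. Qed.

Lemma gderives_trans u v w : gd u v -> gd v w -> gd u w.
Proof.
elim=> [//|u0 v0 w0 H1 _ IH] H2; exact: (@gderives_step _ G _ _ _ H1 (IH H2)).
Qed.

Lemma gderives_ctx x y u v : gd u v -> gd (x ++ u ++ y) (x ++ v ++ y).
Proof.
elim=> [u0|u0 v0 w0 [x0 [y0 [X [rhs [Hin [-> ->]]]]]] _ IH].
  exact: (@gderives_refl _ G).
apply: gderives_step IH.
exists (x ++ x0), (y0 ++ y), X, rhs; split => //.
by rewrite -!catA /=; split => //; rewrite -!catA.
Qed.

Lemma gen_gderives s w : gen s w -> gd s (map inr w).
Proof.
elim=> [|a s0 w0 _ IH|X rhs s0 u v Hin _ IH1 _ IH2].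
- exact: (@gderives_refl _ G).
- by have := gderives_ctx [:: inr a] [::] IH; rewrite /= !cats0.
- apply: (@gderives_step _ _ _ (rhs ++ s0)).
    by exists [::], s0, X, rhs.
  apply: (@gderives_trans _ (map inr u ++ s0)).
    by have := gderives_ctx [::] s0 IH1.
  rewrite map_cat.
  by have := gderives_ctx (map inr u) [::] IH2; rewrite !cats0.
Qed.

Lemma gderive1_gen u v w : gd1 u v -> gen v w -> gen u w.
Proof.
move=> [x [y [X [rhs [Hin [-> ->]]]]]] H.
have [w1 [w2 [-> [H1 H2]]]] := gen_split H.
have [w3 [w4 [-> [H3 H4]]]] := gen_split H2.
by apply: gen_cat H1 _; apply: gen_n Hin H3 H4.
Qed.

Lemma gderives_gen u w : gd u (map inr w) -> gen u w.
Proof.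
move=> H; remember (map inr w) as v eqn:Ev; elim: H w Ev.
- by move=> u0 w0 ->; apply: gen_terms.
- by move=> u0 v0 w0 H1 _ IH w1 Ew; apply: gderive1_gen H1 (IH _ Ew).
Qed.

Lemma CFG_langE w : CFG_lang G w <-> gen [:: inl (gS G)] w.
Proof. by split; [apply: gderives_gen | apply: gen_gderives]. Qed.

End Grammar.

Fixpoint catl (I S : Type) (L : I -> seq S -> Prop) (r : seq I) (w : seq S) : Prop :=
  match r with
  | [::] => w = [::]
  | i :: r' => exists u v, w = u ++ v /\ L i u /\ catl L r' v
  end.

Section LC.
Variables (Sigma : finType) (G : CFG Sigma).
Local Notation sym := (gN G + Sigma)%type.
Local Notation gen := (@gen _ G).

Inductive LC : sym -> sym -> seq Sigma -> Prop :=
| LC_refl X : LC X X [::]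
| LC_step Y X B beta delta u v : (B, beta ++ X :: delta) \in gP G ->
    gen beta [::] -> gen delta u -> LC Y (inl B) v -> LC Y X (u ++ v).

Lemma LC_trans Y X Z u v : LC Y X u -> LC X Z v -> LC Y Z (v ++ u).
Proof.
move=> H1 H2; move: H1; elim: H2 => [//|X0 Z0 B beta delta u0 v0 Hin Hb Hd _ IH] H1.
rewrite -catA; exact: LC_step Hin Hb Hd (IH H1).
Qed.

Lemma LC_sound Y X v u : LC Y X v -> gen [:: X] u -> gen [:: Y] (u ++ v).
Proof.
move=> H; elim: H u => [X0|Y0 X0 B beta delta u0 v0 Hin Hb Hd _ IH] u Hu.
  by rewrite cats0.
rewrite catA; apply: IH; apply: gen_N Hin _.
rewrite -[u ++ u0]cat0s; apply: gen_cat Hb _.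
by rewrite -[X0 :: delta]cat1s; apply: gen_cat.
Qed.

Lemma gen_nil_inv u : gen [::] u -> u = [::].
Proof. by move=> H; inversion H. Qed.

Lemma first_letter s w0 : gen s w0 -> forall a w, w0 = a :: w ->
  exists beta X delta u1 u2, s = beta ++ X :: delta /\ gen beta [::] /\
    LC X (inr a) u1 /\ gen delta u2 /\ w = u1 ++ u2.
Proof.
elim=> [|b s0 w1 Hs _|X rhs s0 u v Hin Hr IHr Hs IHs] a w //.
  case=> <- <-; exists [::], (inr b), s0, [::], w1; do !split => //.
    exact: gen_nil.
  exact: LC_refl.
- case: u Hr IHr => [|b u'] Hr IHr /=.
    move=> Ev; have [beta [Y [delta [u1 [u2 [-> [Hb [HL [Hd ->]]]]]]]]] := IHs a w Ev.
    exists (inl X :: beta), Y, delta, u1, u2; do !split => //.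
    by have := gen_n Hin Hr Hb.
  case=> <- <-.
  have [beta [Y [delta [u1 [u2 [Er [Hb [HL [Hd ->]]]]]]]]] := IHr b u' erefl.
  exists [::], (inl X), s0, (u1 ++ u2), v; do !split => //; first exact: gen_nil.
  apply: (LC_trans _ HL).
  rewrite -[u2]cats0; apply: (LC_step (B:=X) (beta:=beta) (delta:=delta)) Hb Hd (LC_refl _).
  by rewrite -Er.
Qed.

Definition sufs : seq (seq sym) :=
  [::] :: flatten [seq [seq drop k r.2 | k <- iota 0 (size r.2).+1] | r <- gP G].

Lemma sufs_nil : [::] \in sufs.
Proof. by rewrite inE eqxx. Qed.

Lemma sufs_rule B rhs k : (B, rhs) \in gP G -> drop k rhs \in sufs.
Proof.
move=> Hin; case: (leqP k (size rhs)) => Hk; last first.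
  by rewrite drop_oversize ?sufs_nil // ltnW.
rewrite inE; apply/orP; right; apply/flattenP.
exists [seq drop k0 rhs | k0 <- iota 0 (size rhs).+1].
  by apply/mapP; exists (B, rhs).
by apply/mapP; exists k => //; rewrite mem_iota /= add0n ltnS.
Qed.

Lemma sufs_drop s k : s \in sufs -> drop k s \in sufs.
Proof.
rewrite inE => /orP [/eqP ->|/flattenP [x /mapP [[B rhs] Hin ->] /mapP [m _ ->]]].
  by rewrite drop_oversize ?sufs_nil.
by rewrite drop_drop; apply: sufs_rule Hin.
Qed.

Lemma sufs_tail beta X delta : beta ++ X :: delta \in sufs -> delta \in sufs.
Proof.
move=> H; have := sufs_drop (size beta).+1 H.
by rewrite -addn1 drop_cat ltnNge leq_addr /= addKn drop1.
Qed.

Definition Item := (seq_sub sufs * sym * sym)%type.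

Definition ilang0 (i : Item) (w : seq Sigma) : Prop :=
  exists u v, w = u ++ v /\ gen (ssval i.1.1) u /\ LC i.1.2 i.2 v.

Definition ilang (i : Item) (w : seq Sigma) : Prop := w <> [::] /\ ilang0 i w.

Lemma pack2 i1 i2 x1 x2 : ilang0 i1 x1 -> ilang0 i2 x2 ->
  exists r, size r <= 2 /\ catl ilang r (x1 ++ x2) /\
   forall x, catl ilang r x -> exists y1 y2, x = y1 ++ y2 /\ ilang0 i1 y1 /\ ilang0 i2 y2.
Proof.
move=> H1 H2.
case: x1 H1 => [|b1 x1] H1; case: x2 H2 => [|b2 x2] H2.
- exists [::]; split => //; split => // x /= ->; by exists [::], [::].
- exists [:: i2]; split => //; split.
    by exists (b2 :: x2), [::]; rewrite cats0.
  move=> x /= [u [v [-> [[_ Hu] ->]]]]; exists [::], u; by rewrite cats0.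
- exists [:: i1]; split => //; split.
    by exists (b1 :: x1), [::]; rewrite cats0.
  move=> x /= [u [v [-> [[_ Hu] ->]]]]; exists u, [::]; by rewrite cats0.
- exists [:: i1; i2]; split => //; split.
    exists (b1 :: x1), (b2 :: x2); split => //; split => //.
    by exists (b2 :: x2), [::]; rewrite cats0.
  move=> x /= [u [v [-> [[_ Hu] [u' [v' [-> [[_ Hu'] ->]]]]]]]].
  by exists u, u'; rewrite cats0.
Qed.

Lemma caseA d (Hd : d \in sufs) T B v0 a u' : gen d (a :: u') -> LC T B v0 ->
  exists r, size r <= 2 /\ catl ilang r (u' ++ v0) /\
   forall x, catl ilang r x -> ilang0 (SeqSub Hd, T, B) (a :: x).
Proof.
move=> Hg HL.
have [beta [X [delta [u1 [u2 [Ed [Hb [HX [Hdl Eu]]]]]]]]] := first_letter Hg erefl.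
have Hdelta : delta \in sufs by apply: (@sufs_tail beta X); rewrite -Ed.
pose i1 : Item := (SeqSub sufs_nil, X, inr a).
pose i2 : Item := (SeqSub Hdelta, T, B).
have H1 : ilang0 i1 u1 by exists [::], u1; do !split => //; exact: gen_nil.
have H2 : ilang0 i2 (u2 ++ v0) by exists u2, v0.
have [r [Hr [Hc Hinc]]] := pack2 H1 H2.
exists r; split => //; split; first by rewrite Eu -catA.
move=> x /Hinc [y1 [y2 [-> [[z [y1' [Ey1 [Hz HLy]]]] [z1 [z2 [-> [Hz1 Hz2]]]]]]]].
rewrite (gen_nil_inv Hz) /= in Ey1; subst y1'.
exists (a :: y1 ++ z1), z2; split; first by rewrite /= catA.
split => //=; rewrite Ed.
rewrite -[a :: y1 ++ z1]cat0s; apply: gen_cat Hb _.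
rewrite -[X :: delta]cat1s -cat_cons; apply: gen_cat Hz1.
have := LC_sound HLy (gen_t a (gen_nil G)); by [].
Qed.

Lemma dec_main T B v0 : LC T B v0 -> forall d (Hd : d \in sufs) u0 a w,
  gen d u0 -> u0 ++ v0 = a :: w ->
  exists r, size r <= 2 /\ catl ilang r w /\
   forall x, catl ilang r x -> ilang0 (SeqSub Hd, T, B) (a :: x).
Proof.
elim=> [X|Y X B0 beta delta u v Hin Hb Hdl HL IH] d Hd u0 a w Hg.
  rewrite cats0 => Eu; subst u0; have := caseA Hd Hg (LC_refl X).
  by rewrite cats0.
case: u0 Hg => [|b u0'] Hg /=; last first.
  case=> <- <-; idtac. have := caseA Hd Hg (LC_step Hin Hb Hdl HL). by [].
move=> Ew.
have Hdelta : delta \in sufs.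
  by have := sufs_rule (size beta).+1 Hin; rewrite -addn1 drop_cat ltnNge leq_addr /= addKn drop1.
have [r [Hr [Hc Hinc]]] := IH delta Hdelta u a w Hdl Ew.
exists r; split => //; split => // x /Hinc [z1 [z2 [Ex [Hz1 Hz2]]]].
exists [::], (a :: x); split => //; split => //.
by rewrite /= Ex; apply: LC_step Hin Hb Hz1 Hz2.
Qed.

Lemma ilang_eps i : ~ ilang i [::].
Proof. by case. Qed.

Lemma ilang_dec i a w : ilang i (a :: w) ->
  exists r, size r <= 2 /\ catl ilang r w /\ forall x, catl ilang r x -> ilang i (a :: x).
Proof.
case: i => [[[d Hd] T] B] [_ [u [v [Ew [Hg HL]]]]] /=.
have [r [Hr [Hc Hinc]]] := dec_main HL Hd Hg (esym Ew).
by exists r; split => //; split => // x /Hinc.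
Qed.

Lemma ilang_start a w : gen [:: inl (gS G)] (a :: w) -> w <> [::] ->
  exists t, ilang t w /\ forall v, ilang t v -> gen [:: inl (gS G)] (a :: v).
Proof.
move=> Hg Hw.
have [beta [X [delta [u1 [u2 [Es [Hb [HX [Hdl Eu]]]]]]]]] := first_letter Hg erefl.
case: beta Es Hb => [|y beta] /=; last by case=> _ /(congr1 size); rewrite size_cat /= addnS.
case=> EX Ed _; subst X delta; rewrite (gen_nil_inv Hdl) cats0 in Eu; subst u1.
exists (SeqSub sufs_nil, inl (gS G), inr a); split.
  by split => //; exists [::], w; do !split => //; exact: gen_nil.
move=> v [_ [u [v' [-> [Hu HL]]]]]; rewrite (gen_nil_inv Hu) /=.
exact: (LC_sound HL (gen_t a (gen_nil G))).
Qed.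

End LC.

Definition pb (P : Prop) : bool :=
  if excluded_middle_informative P then true else false.

Lemma pbP P : reflect P (pb P).
Proof. by rewrite /pb; case: excluded_middle_informative => H; constructor. Qed.

Section Reach.
Variables (Sigma : finType) (A : MPDA Sigma).

Inductive reach : config A -> config A -> seq Sigma -> Prop :=
| reach0 c : reach c c [::]
| reachS c c1 c2 w : mstep c c1 -> reach c1 c2 w -> reach c c2 (@mtau _ A c1.1 :: w).

Lemma reach_fun c c' u : reach c c' u -> exists n (f : nat -> config A),
  f 0 = c /\ f n = c' /\ (forall i, i < n -> mstep (f i) (f i.+1)) /\
  u = [seq @mtau _ A (f i).1 | i <- iota 1 n].
Proof.
elim=> [c0|c0 c1 c2 w Hs _ [n [f [E0 [En [Hst Ew]]]]]].
  by exists 0, (fun _ => c0).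
exists n.+1, (fun i => if i is i'.+1 then f i' else c0); split => //; split => //.
split; first by case=> [|i] /= Hi; [rewrite E0 | apply: Hst].
rewrite /= E0 Ew; congr (_ :: _).
rewrite -[2]/(1 + 1) iotaDl -map_comp; apply: eq_map => i /=.
by [].
Qed.

Lemma MPDA_langE w : MPDA_lang A w <->
  exists c0 c u, minitial c0 /\ mfinal c /\ reach c0 c u /\ w = @mtau _ A c0.1 :: u.
Proof.
split.
  move=> [n [c [Hi [Hf [Hs ->]]]]].
  have H : forall k, k <= n ->
      reach (c (n - k)) (c n) [seq @mtau _ A (c i).1 | i <- iota (n - k).+1 k].
    elim=> [|k IH] Hk; first by rewrite subn0; apply: reach0.
    have E : n - k = (n - k.+1).+1 by rewrite subnSK.
    have := IH (ltnW Hk); rewrite E => Hr.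
    by apply: reachS Hr; apply: Hs; rewrite -E leq_subr.
  exists (c 0), (c n), [seq @mtau _ A (c i).1 | i <- iota 1 n]; do !split => //.
  by have := H n (leqnn n); rewrite subnn.
move=> [c0 [c [u [Hi [Hf [Hr ->]]]]]].
have [n [f [E0 [En [Hst Eu]]]]] := reach_fun Hr.
exists n, f; rewrite E0 En; do !split => //.
by rewrite /= E0 Eu.

Qed.

Lemma reach_nil_inv c c' : reach c c' [::] -> c = c'.
Proof. by move=> H; inversion H. Qed.

End Reach.

Section CatL.
Variables (I S : Type) (lang : I -> seq S -> Prop).

Lemma catl_cat r1 r2 w1 w2 : catl lang r1 w1 -> catl lang r2 w2 ->
  catl lang (r1 ++ r2) (w1 ++ w2).
Proof.
elim: r1 w1 => [|i r1 IH] w1 /=; first by move=> ->.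
move=> [u [v [-> [Hu Hv]]]] H2; exists u, (v ++ w2); rewrite catA; split => //.
by split => //; apply: IH.
Qed.

Lemma catl_split r1 r2 w : catl lang (r1 ++ r2) w ->
  exists w1 w2, w = w1 ++ w2 /\ catl lang r1 w1 /\ catl lang r2 w2.
Proof.
elim: r1 w => [|i r1 IH] w /=; first by move=> H; exists [::], w.
move=> [u [v [-> [Hu /IH [w1 [w2 [-> [H1 H2]]]]]]]].
exists (u ++ w1), w2; rewrite catA; split => //; split => //.
by exists u, w1.
Qed.
End CatL.

Section Machine.
Variables (Sigma Item : finType) (lang : Item -> seq Sigma -> Prop)
  (L : seq Sigma -> Prop).
Hypothesis Heps : forall i, ~ lang i [::].
Hypothesis Hdec : forall i a w, lang i (a :: w) -> exists r, size r <= 2 /\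
  catl lang r w /\ forall x, catl lang r x -> lang i (a :: x).
Hypothesis Hstart : forall w, L w -> exists a w' t, w = a :: w' /\ lang t w' /\
  (forall v, lang t v -> L (a :: v)).

Definition MQ : finType := (Sigma * option Item * option Item * bool)%type.
Definition MG : finType := option (Item * bool).

Definition St t a r := forall x, catl lang r x -> lang t (a :: x).

Definition DeltaP (a : Sigma) (ot ob : option Item) (e : bool)
  (g g' : option MG) (a' : Sigma) (ot' ob' : option Item) (e' : bool) : Prop :=
  exists t, ot = Some t /\ (
   (exists j, g = None /\ g' = None /\ ot' = Some j /\ ob' = ob /\ e' = e /\ St t a' [:: j])
  \/ (exists j1 j2, g = None /\ g' = None /\ ob = None /\ e = true /\ ot' = Some j1 /\
        ob' = Some j2 /\ e' = true /\ St t a' [:: j1; j2])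
  \/ (exists j1 j2 bb, g = None /\ g' = Some (Some (j2, e)) /\ ob = Some bb /\
        ot' = Some j1 /\ ob' = ob /\ e' = false /\ St t a' [:: j1; j2])
  \/ (exists z, g = Some z /\ g' = None /\ ob = None /\ ot' = None /\ St t a' [::])
  \/ (exists bb, g = None /\ g' = None /\ ob = Some bb /\ e = true /\ ot' = Some bb /\
        ob' = None /\ e' = true /\ St t a' [::])
  \/ (exists bb y f, g = Some (Some (y, f)) /\ g' = None /\ ob = Some bb /\ e = false /\
        ot' = Some y /\ ob' = ob /\ e' = f /\ St t a' [::])).

Definition Mdelta (x : MQ * option MG * option MG * MQ) : bool :=
  let: (q, g, g', q') := x in
  let: (a, ot, ob, e) := q in
  let: (a', ot', ob', e') := q' in
  pb (DeltaP a ot ob e g g' a' ot' ob' e').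

Lemma Mdelta_ok q g g' q' : ~~ Mdelta (q, Some g, Some g', q').
Proof.
move: q q' => [[[a ot] ob] e] [[[a' ot'] ob'] e'] /=.
apply/negP => /pbP [t [_ H]].
repeat (destruct H as [H|H]; [decompose [ex and] H; congruence|]).
decompose [ex and] H; congruence.
Qed.

Definition Mach : MPDA Sigma := {|
  mQ := MQ; mGamma := MG; mdelta := Mdelta; mdelta_ok := Mdelta_ok;
  mtau := fun q => q.1.1.1;
  mI := fun q => pb (exists t, q.1.1.2 = Some t /\ q.1.2 = None /\ q.2 = true /\
                       forall v, lang t v -> L (q.1.1.1 :: v));
  mF := fun q => q.1.1.2 == None |}.

Fixpoint flagsOK (m : seq (Item * bool)) (e : bool) : Prop :=
  match m with
  | [::] => e = true
  | (j, f) :: m' => e = false /\ flagsOK m' f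
  end.

Definition Rep (c : config Mach) (sg : seq Item) : Prop :=
  let: (a, ot, ob, e) := (c.1 : MQ) in
  match ot with
  | None => sg = [::] /\ c.2 = [::]
  | Some t => exists mid z, c.2 = map Some mid ++ [:: z] /\ flagsOK mid e /\
      sg = t :: map fst mid ++ oseq ob /\ (ob = None -> mid = [::])
  end.

Lemma step_rep c c1 sg : mstep c c1 -> Rep c sg ->
  exists t rest r, sg = t :: rest /\ St t (@mtau _ Mach c1.1) r /\ Rep c1 (r ++ rest).
Proof.
move: c c1 => [[[[a ot] ob] e] s] [[[[a' ot'] ob'] e'] s'].
move=> [g [g' [al [Hd [/= Es [/= Es' Hne]]]]]].
move: Hd => /= /pbP [t [Eot H]]; subst ot.
move=> [mid [z [Hs [Hfl [Esg Hob]]]]].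
exists t, (map fst mid ++ oseq ob).
case: H => [H|[H|[H|[H|[H|H]]]]]; decompose [ex and] H; subst => {H}.
- exists [:: x]; split => //; split => //=.
  by exists mid, z; move: Hs => /= ->.
- have Em := Hob erefl; subst mid.
  exists [:: x; x0]; split => //; split => //=.
  by exists [::], z; move: Hs => /= ->.
- exists [:: x; x0]; split => //; split => //=.
  by exists ((x0, e) :: mid), z; move: Hs => /= ->.
- have Em := Hob erefl; subst mid.
  exists [::]; split => //; split => //=.
  by move: Hs => /= -[_ ->].
- exists [::]; split => //; split => //=.
  case: mid Hs Hfl Hob => [|[j f0] m] Hs Hfl Hob; last by case: Hfl.
  by exists [::], z; move: Hs => /= ->.
- exists [::]; split => //; split => //=.
  case: mid Hs Hfl Hob => [|[j f0] m] Hs Hfl Hob; first by [].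
  move: Hs => /= -[Ej Ef ->]; subst; case: Hfl => _ Hfl.
  by exists m, z.
Qed.

Lemma step_exists c t rest r a' : Rep c (t :: rest) -> St t a' r -> size r <= 2 ->
  exists c1, mstep c c1 /\ @mtau _ Mach c1.1 = a' /\ Rep c1 (r ++ rest).
Proof.
move: c => [[[[a ot] ob] e] s]; case: ot => [t0|]; last by case.
move=> [mid [z [/= Hs [Hfl [[<- ->] Hob]]]]] HS Hr.
have Hne : s <> [::] by rewrite Hs; case: (map _ _).
case: r HS Hr => [|j [|j2 [|? ?]]] HS Hr //.
- case: ob Hob => [bb|] Hob; last first.
    have Em := Hob erefl; subst mid; move: Hs => /= ->.
    exists ((a', None, None, true), [::]); split => //.
    exists (Some z), None, [::]; split => //.
    by apply/pbP; exists t; split => //; right; right; right; left; exists z.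
  case: e Hfl => Hfl.
    case: mid Hs Hfl Hob => [|[j f0] m] Hs Hfl Hob; last by case: Hfl.
    exists ((a', Some bb, None, true), s); split => //; last first.
      by split => //; exists [::], z.
    exists None, None, s; split => //.
    by apply/pbP; exists t; split => //; right; right; right; right; left; exists bb.
  case: mid Hs Hfl Hob => [|[j f0] m] Hs Hfl Hob; first by [].
  case: Hfl => _ Hfl.
  exists ((a', Some j, Some bb, f0), map Some m ++ [:: z]); split => //; last first.
    by split => //; exists m, z.
  exists (Some (Some (j, f0))), None, (map Some m ++ [:: z]); split => //.
  apply/pbP; exists t; split => //; right; right; right; right; right.
  by exists bb, j, f0.
- exists ((a', Some j, ob, e), s); split => //; last first.
    by split => //; exists mid, z.
  exists None, None, s; split => //.
  by apply/pbP; exists t; split => //; left; exists j.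
- case: ob Hob => [bb|] Hob; last first.
    have Em := Hob erefl; subst mid; move: Hfl => /= Hfl; subst e.
    exists ((a', Some j, Some j2, true), s); split => //; last first.
      by split => //; exists [::], z.
    exists None, None, s; split => //.
    by apply/pbP; exists t; split => //; right; left; exists j, j2.
  exists ((a', Some j, Some bb, false), Some (j2, e) :: s); split => //; last first.
    by split => //; exists ((j2, e) :: mid), z; rewrite Hs.
  exists None, (Some (Some (j2, e))), s; split => //.
  by apply/pbP; exists t; split => //; right; right; left; exists j, j2, bb.
Qed.

Lemma mach_sound c c' u : reach c c' u -> mfinal c' -> forall sg, Rep c sg -> catl lang sg u.
Proof.
elim=> [c0|c0 c1 c2 w Hs _ IH] Hf sg.
  move: c0 Hf => [[[[a ot] ob] e] s] [/= /eqP -> _]; by case=> ->.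
move=> Hr; have [t [rest [r [-> [HS Hr1]]]]] := step_rep Hs Hr.
have [w1 [w2 [-> [H1 H2]]]] := catl_split (IH Hf _ Hr1).
by exists (@mtau _ Mach c1.1 :: w1), w2; split => //; split => //; apply: HS.
Qed.

Lemma mach_complete u : forall c sg, Rep c sg -> catl lang sg u ->
  exists c', reach c c' u /\ mfinal c'.
Proof.
elim: u => [|a0 u IH] c sg.
  case: sg => [|t rest] Hr /=.
    move=> _; exists c; split; first exact: reach0.
    move: c Hr => [[[[a ot] ob] e] s]; case: ot => [t|] /=; last by case=> _ /= ->.
    by move=> [mid [z [_ [_ []]]]].
  move=> [u1 [u2 [E [Hu1 _]]]]; case: u1 E Hu1 => [|? ?] // _ Hu1.
  by case: (Heps Hu1).
case: sg => [|t rest] Hr /=; first by [].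
move=> [u1 [u2 [Eu [Hu1 Hrest]]]].
case: u1 Eu Hu1 => [|a1 u1'] Eu Hu1; first by case: (Heps Hu1).
case: Eu => Ea Eu; subst a1 u.
have [r [Hsz [Hc HS]]] := Hdec Hu1.
have [c1 [Hst [Ea Hr1]]] := step_exists Hr HS Hsz.
have [c' [Hre Hf]] := IH c1 _ Hr1 (catl_cat Hc Hrest).
by exists c'; split => //; rewrite -Ea; apply: reachS Hst Hre.
Qed.

Lemma mach_correct w : MPDA_lang Mach w <-> L w.
Proof.
rewrite MPDA_langE; split.
  move=> [c0 [c [u [[Hi Hsz] [Hf [Hr ->]]]]]].
  move: c0 Hi Hsz Hr => [[[[a ot] ob] e] s] /= /pbP [t [-> [-> [-> Hinc]]]] Hsz Hr.
  apply: Hinc.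
  have Hrep : Rep (a, Some t, None, true, s) [:: t].
    case: s Hsz Hr => [|z [|? ?]] //= _ _.
    by exists [::], z.
  have [u1 [u2 [-> [Hu1 ->]]]] := mach_sound Hr Hf Hrep.
  by rewrite cats0.
move=> /Hstart [a [w' [t [-> [Ht Hinc]]]]].
have Hrep : Rep ((a, Some t, None, true) : MQ, [:: (None : MG)]) [:: t].
  by exists [::], None.
have [c' [Hr Hf]] := mach_complete Hrep (ex_intro _ w' (ex_intro _ [::]
  (conj (esym (cats0 w')) (conj Ht (erefl [::]))))).
exists ((a, Some t, None, true) : MQ, [:: (None : MG)]), c', w'; do !split => //.
by apply/pbP; exists t.
Qed.

End Machine.

Section FromMPDA.
Variables (Sigma : finType) (A : MPDA Sigma).
Local Notation Q := (mQ A).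
Local Notation Ga := (mGamma A).
Local Notation tau := (@mtau _ A).

Definition NT : finType := option (Q * Ga * Q).
Definition Desc : finType :=
  (((Q * Ga * Q) + (Q * Ga * Q)) + ((Q * Q * Ga * Q) + (Q * Q * Ga * Ga * Q * Q)))%type.

Definition toRule (d : Desc) : NT * seq (NT + Sigma) :=
  match d with
  | inl (inl (p, X, q)) => (None, [:: inr (tau p); inl (Some (p, X, q))])
  | inl (inr (p, X, q)) => (Some (p, X, q), [:: inr (tau q)])
  | inr (inl (p, p', X, q)) => (Some (p, X, q), [:: inr (tau p'); inl (Some (p', X, q))])
  | inr (inr (p, p', Y, X, r, q)) =>
      (Some (p, X, q), [:: inr (tau p'); inl (Some (p', Y, r)); inl (Some (r, X, q))])
  end.

Definition validD (d : Desc) : bool :=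
  match d with
  | inl (inl (p, X, q)) => @mI _ A p && @mF _ A q
  | inl (inr (p, X, q)) => @mdelta _ A (p, Some X, None, q)
  | inr (inl (p, p', X, q)) => @mdelta _ A (p, None, None, p')
  | inr (inr (p, p', Y, X, r, q)) => @mdelta _ A (p, None, Some Y, p')
  end.

Definition Gram : CFG Sigma := {| gN := NT; gS := None;
  gP := [seq toRule d | d <- enum Desc & validD d] |}.

Lemma inP N rhs : (N, rhs) \in gP Gram <-> exists d, validD d /\ toRule d = (N, rhs).
Proof.
split.
  by move=> /mapP [d]; rewrite mem_filter => /andP [Hv _] E; exists d.
move=> [d [Hv E]]; apply/mapP; exists d => //.
by rewrite mem_filter Hv mem_enum.
Qed.

Fixpoint chainOK (p : Q) (ch : seq (Q * Ga * Q)) (q : Q) : Prop :=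
  match ch with
  | [::] => p = q
  | (p1, X, q1) :: ch' => p1 = p /\ chainOK q1 ch' q
  end.

Definition stk (ch : seq (Q * Ga * Q)) : seq Ga := map (fun x => x.1.2) ch.
Definition nts (ch : seq (Q * Ga * Q)) : seq (NT + Sigma) :=
  map (fun x => inl (Some x)) ch.

Lemma reach_empty (c c' : config A) u : reach c c' u -> c.2 = [::] -> c' = c /\ u = [::].
Proof.
case=> // c0 c1 c2 w [g [g' [al [_ [E1 [_ Hne]]]]]] _ E.
by rewrite E in E1; rewrite -E1 in Hne.
Qed.

Lemma reach_cat (c1 c2 c3 : config A) u v :
  reach c1 c2 u -> reach c2 c3 v -> reach c1 c3 (u ++ v).
Proof.
elim=> // c c' c'' w Hs _ IH H2.
exact: reachS Hs (IH H2).
Qed.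


Lemma gen_by_rule d u : validD d -> @gen _ Gram (toRule d).2 u ->
  @gen _ Gram [:: inl (toRule d).1] u.
Proof.
move=> Hv Hg.
have Hin : ((toRule d).1, (toRule d).2) \in gP Gram.
  by apply/inP; exists d; split => //; case: (toRule d).
exact: (@gen_N _ Gram _ _ _ Hin Hg).
Qed.

Lemma run_gen (c c' : config A) u : reach c c' u ->
  forall p gam q, c = (p, gam) -> c' = (q, [::]) -> gam <> [::] ->
  exists ch, chainOK p ch q /\ stk ch = gam /\ @gen _ Gram (nts ch) u.
Proof.
elim=> [c0|c0 c1 c2 w Hs Hr IH] p gam q E0 E1 Hne.
  by subst c0; case: E1 => _ E; subst gam.
subst c0 c2; move: c1 Hs Hr IH => [p1 gam1] [g [g' [al [Hd [/= Eg [/= Eg1 _]]]]]] Hr IH.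
rewrite /= in Hd; case: g g' Hd Eg Eg1 => [X|] [Y|] Hd Eg Eg1.
- by move: (mdelta_ok p X Y p1); rewrite Hd.
-
  subst gam gam1; case: al Hr IH Hne => [|Z al] Hr IH Hne.
    have [E1 E2] := reach_empty Hr erefl; case: E1 => Eq; subst q w.
    exists [:: (p, X, p1)]; split => //; split => //.
    rewrite /nts /= -[[:: tau p1]]cats0.
    apply: (gen_n (rhs := [:: inr (tau p1)])); last exact: gen_nil.
      by apply/inP; exists (inl (inr (p, X, p1))).
    exact: (gen_terms Gram [:: tau p1]).
  have [ch' [Hc [Hs Hg]]] := IH p1 (Z :: al) q erefl erefl (fun H => ltac:(discriminate H)).
  exists ((p, X, p1) :: ch'); split => //; split; first by rewrite /stk /= -Hs.
  rewrite /= -[tau p1 :: w]cat1s; apply: (gen_n (rhs := [:: inr (tau p1)])) Hg.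
    by apply/inP; exists (inl (inr (p, X, p1))).
  exact: (gen_terms Gram [:: tau p1]).
-
  subst gam1; rewrite /= in Eg; subst gam.
  have [ch' [Hc [Hs Hg]]] := IH p1 (Y :: al) q erefl erefl (fun H => ltac:(discriminate H)).
  case: ch' Hc Hs Hg => [|[[p1' Y'] r] [|[[r' X] r2] ch'']] //=.
    by move=> _ [_ E]; rewrite -E in Hne.
  move=> [-> [-> Hc]] [-> Es] Hg.
  exists ((p, X, r2) :: ch''); split => //; split; first by rewrite /stk /= Es.
  have [w1 [w2 [-> [H1 Hg2]]]] := gen_cons_inv Hg.
  have [w3 [w4 [-> [H3 H4]]]] := gen_cons_inv Hg2.
  rewrite /nts /= catA -[tau p1 :: _]/((tau p1 :: w1 ++ w3) ++ w4).
  apply: (@gen_n _ Gram _ [:: inr (tau p1); inl (Some (p1, Y, r)); inl (Some (r, X, r2))] _ _ _ _ _ H4).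
    by apply/inP; exists (inr (inr (p, p1, Y, X, r, r2))).
  apply: gen_t; rewrite -(cats0 w3).
  exact: (@gen_cat _ Gram [:: _] _ _ _ H1 (@gen_cat _ Gram [:: _] [::] _ _ H3 (gen_nil Gram))).
-
  rewrite /= in Eg Eg1; subst gam gam1.
  have [ch' [Hc [Hs Hg]]] := IH p1 al q erefl erefl Hne.
  case: ch' Hc Hs Hg => [|[[p1' X] r] ch''] //=.
    by move=> _ E; rewrite -E in Hne.
  move=> [-> Hc] Hs Hg.
  exists ((p, X, r) :: ch''); split => //; split; first by rewrite -Hs.
  have [w1 [w2 [-> [H1 H2]]]] := gen_cons_inv Hg.
  rewrite /nts /= -[tau p1 :: _]/((tau p1 :: w1) ++ w2).
  apply: (@gen_n _ Gram _ [:: inr (tau p1); inl (Some (p1, X, r))] _ _ _ _ _ H2).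
    by apply/inP; exists (inr (inl (p, p1, X, r))).
  by apply: gen_t; rewrite -(cats0 w1); apply: (@gen_cat _ Gram [:: _] [::] _ _ H1 (gen_nil Gram)).
Qed.

End FromMPDA.

Section FromMPDA2.
Variables (Sigma : finType) (A : MPDA Sigma).
Local Notation Q := (mQ A).
Local Notation Ga := (mGamma A).
Local Notation tau := (@mtau _ A).
Local Notation Gram := (Gram A).

Lemma gen_run s w : @gen _ Gram s w -> forall t ch p q al,
  s = map inr t ++ nts ch -> chainOK p ch q ->
  exists w', w = t ++ w' /\ reach (p, stk ch ++ al) (q, al) w'.
Proof.
elim=> [|a s0 w0 Hs IH|N rhs s0 u v Hin Hr IHr Hs IHs] t ch p q al.
- case: t => [|b t] //; case: ch => [|x ch] // _ /= ->.
  by exists [::]; split => //; apply: reach0.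
- case: t => [|b t] /=.
    by case: ch => [|[[p0 X] q0] ch] //.
  case=> <- Es Hc; have [w' [-> Hre]] := IH t ch p q al Es Hc.
  by exists w'.
- case: t => [|b t] //=.
  case: ch => [|[[p0 X] q1] ch] //= [EN Es] [Ep Hc]; subst p0 N.
  have [w' [Ev Hre]] := IHs [::] ch q1 q al Es Hc; rewrite /= in Ev; subst w'.
  have [d [Hv Ed]] := iffLR (inP _ _) Hin.
  have Hmid : reach (p, X :: stk ch ++ al) (q1, stk ch ++ al) u.
    move: d Hv Ed => [[[[p' X'] q']|[[p' X'] q']]|[[[[p' p1] X'] q']|[[[[[p' p1] Y] X'] r] q']]] /= Hv [].
    + by [].
    + move=> Ep EX Eq Er; subst p' X' q' rhs.
      have -> := gen_terms_inv (t := [:: tau q1]) Hr.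
      apply: (reachS (c1 := (q1, stk ch ++ al))) (reach0 _).
      by exists (Some X), None, (stk ch ++ al); split => //.
    + move=> Ep EX Eq Er; subst p' X' q' rhs.
      have [w' [-> Hre']] := IHr [:: tau p1] [:: (p1, X, q1)] p1 q1 (stk ch ++ al)
        erefl (conj erefl erefl).
      apply: (reachS (c1 := (p1, X :: stk ch ++ al))) Hre'.
      by exists None, None, (X :: stk ch ++ al); split => //.
    + move=> Ep EX Eq Er; subst p' X' q' rhs.
      have [w' [-> Hre']] := IHr [:: tau p1] [:: (p1, Y, r); (r, X, q1)] p1 q1
        (stk ch ++ al) erefl (conj erefl (conj erefl erefl)).
      apply: (reachS (c1 := (p1, Y :: X :: stk ch ++ al))) Hre'.
      by exists None, (Some Y), (X :: stk ch ++ al); split => //.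
  exists (u ++ v); split => //.
  exact: reach_cat Hmid Hre.
Qed.

Lemma Gram_correct w : CFG_lang Gram w <-> MPDA_lang A w.
Proof.
rewrite CFG_langE MPDA_langE; split.
  move=> /gen_single [rhs [/inP [d [Hv Ed]] Hg]].
  move: d Hv Ed => [[[[p X] q]|[[p X] q]]|[[[[p p1] X] q]|[[[[[p p1] Y] X] r] q]]] //= Hv [Er].
  subst rhs; case/andP: Hv => HI HF.
  have [w' [-> Hre]] := gen_run Hg (t := [:: tau p]) (ch := [:: (p, X, q)]) (p := p) (q := q)
    [::] erefl (conj erefl erefl).
  by exists (p, [:: X]), (q, [::]), w'; do !split => //.
move=> [[p s] [[q s'] [u [[/= HI /= Hsz] [[/= HF /= Es'] [Hre ->]]]]]]; subst s'.
case: s Hsz Hre => [|X [|? ?]] // _ Hre.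
have [ch [Hc [Hs Hg]]] := run_gen Hre erefl erefl (fun H => ltac:(discriminate H)).
case: ch Hc Hs Hg => [|[[p0 X0] q0] [|? ?]] //= [Ep Eq] [EX] Hg; subst p0 q0 X0.
apply: (@gen_N _ Gram _ [:: inr (tau p); inl (Some (p, X, q))]).
  by apply/inP; exists (inl (inl (p, X, q))); rewrite /= HI HF.
exact: gen_t.
Qed.

Lemma MPDA_size w : MPDA_lang A w -> 2 <= size w.
Proof.
rewrite MPDA_langE => -[c0 [c [u [[_ Hsz] [[_ Hc] [Hre ->]]]]]].
case: u Hre => [|? ?] //= Hre.
by move: (reach_nil_inv Hre) => Ec; subst c; rewrite Hc in Hsz.
Qed.

End FromMPDA2.

Theorem theorem3p2 (Sigma : finType) (L : seq Sigma -> Prop) :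
  (exists A : MPDA Sigma, forall w, MPDA_lang A w <-> L w) <->
  (context_free L /\ forall w, L w -> 2 <= size w).
Proof.
split.
  move=> [A HA]; split.
    by exists (Gram A) => w; rewrite Gram_correct.
  by move=> w /HA; apply: MPDA_size.
move=> [[G HG] Hsz].
exists (Mach (@ilang _ G) L) => w; apply: mach_correct.
- exact: ilang_eps.
- exact: ilang_dec.
- move=> w0 Hw0; have := Hsz _ Hw0.
  case: w0 Hw0 => [|a [|b w']] //= Hw0 _.
  have := (HG (a :: b :: w')).2 Hw0; rewrite CFG_langE => Hg.
  have [t [Ht Hinc]] := ilang_start Hg (fun H => ltac:(discriminate H)).
  exists a, (b :: w'), t; split => //; split => // v /Hinc Hv.
  by apply/HG; rewrite CFG_langE.
Qed.
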